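(* Let $K$ be a triangle and $p\ge1$. The space $\mathcal P_p(K;\mathbb S)$ is unisolvent with respect to the following degrees of freedom for $\sigma\in\mathcal P_p(K;\mathbb S)$: (i) for each vertex $\mathbf x$ of $K$, the 3 values $\sigma(\mathbf x)$ (the entries of the symmetric matrix); (ii) for each edge $\gamma$ of $K$, the $2(p-1)$ values $\int_\gamma(\sigma\mathbf n)\cdot r\,\mathrm ds$ for $r\in\mathcal P_{p-2}(\gamma;\mathbb V)$; (iii) the $\tfrac32p(p-1)$ values $\int_K\sigma:\tau\,\mathrm dx$ for $\tau\in\Sigma^p_0(K;\mathbb S)$. That is, a $\sigma\in\mathcal P_p(K;\mathbb S)$ on which all these functionals vanish is zero.
   Context: $\mathbb V=\mathbb R^2$ and $\mathbb S=\mathbb R^{2\times2}_{\rm sym}$; $\mathbf n$ is the outward unit normal of $K$, and $A:B=\sum_{ij}A_{ij}B_{ij}$. We set $\Sigma^p_0(K;\mathbb S)=\{\tau\in\mathcal P_p(K;\mathbb S):\tau\mathbf n|_{\partial K}=0\}$, and by convention $\mathcal P_{-1}=\{0\}$. *)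

(* Defs.v *)
From Stdlib Require Import Reals.
From Coquelicot Require Import Coquelicot.
Open Scope R_scope.

Fixpoint sumlt (m : nat) (f : nat -> R) : R :=
  match m with O => 0 | S m' => sumlt m' f + f m' end.

Definition is_poly2 (p : nat) (f : R -> R -> R) : Prop :=
  exists c : nat -> nat -> R, forall x y : R,
    f x y = sumlt (S p) (fun i => sumlt (S p - i) (fun j => c i j * x ^ i * y ^ j)).

(* g : R -> R is a polynomial with at most m coefficients, i.e. degree <= m-1;
   m = 0 gives only the zero polynomial (P_{-1} = {0}). *)
Definition is_poly1 (m : nat) (g : R -> R) : Prop :=
  exists c : nat -> R, forall t : R, g t = sumlt m (fun k => c k * t ^ k).

(* a symmetric-matrix-valued field on R^2: [[s11, s12], [s12, s22]] *)
Record symfield := SymField { s11 : R -> R -> R; s12 : R -> R -> R; s22 : R -> R -> R }.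

Definition is_polySym (p : nat) (s : symfield) : Prop :=
  is_poly2 p (s11 s) /\ is_poly2 p (s12 s) /\ is_poly2 p (s22 s).

Definition pt := (R * R)%type.

Definition det2 (a b c : pt) : R :=
  (fst b - fst a) * (snd c - snd a) - (snd b - snd a) * (fst c - fst a).

Definition dist2 (u v : pt) : R :=
  sqrt ((fst v - fst u) ^ 2 + (snd v - snd u) ^ 2).

Definition seg (u v : pt) (t : R) : pt :=
  (fst u + t * (fst v - fst u), snd u + t * (snd v - snd u)).

(* outward unit normal of the edge [u,v] of the triangle whose third vertex is w *)
Definition onormal (u v w : pt) : pt :=
  let m := ((snd v - snd u) / dist2 u v, - (fst v - fst u) / dist2 u v) in
  if Rlt_dec (fst m * (fst w - fst u) + snd m * (snd w - snd u)) 0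
  then m else (- fst m, - snd m).

Definition sigma_n (s : symfield) (n x : pt) : pt :=
  (s11 s (fst x) (snd x) * fst n + s12 s (fst x) (snd x) * snd n,
   s12 s (fst x) (snd x) * fst n + s22 s (fst x) (snd x) * snd n).

Definition ddot (s t : symfield) (x y : R) : R :=
  s11 s x y * s11 t x y + 2 * (s12 s x y * s12 t x y) + s22 s x y * s22 t x y.

(* line integral over edge [u,v] of a function given in the affine parameter t in [0,1] *)
Definition edge_int (u v : pt) (g : R -> R) : R :=
  dist2 u v * RInt g 0 1.

(* integral over the triangle abc (change of variables from the reference triangle) *)
Definition tri_int (a b c : pt) (f : R -> R -> R) : R :=
  Rabs (det2 a b c) *
  RInt (fun s => RInt (fun t =>
     f (fst a + s * (fst b - fst a) + t * (fst c - fst a))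
       (snd a + s * (snd b - snd a) + t * (snd c - snd a))) 0 (1 - s)) 0 1.

Definition vertex_dof0 (s : symfield) (x : pt) : Prop :=
  s11 s (fst x) (snd x) = 0 /\ s12 s (fst x) (snd x) = 0 /\ s22 s (fst x) (snd x) = 0.

(* DOF (ii) on edge [u,v] (third vertex w): int_gamma (sigma n).r ds = 0 for all r in P_{p-2}(gamma;V) *)
Definition edge_dof0 (p : nat) (s : symfield) (u v w : pt) : Prop :=
  forall r1 r2 : R -> R, is_poly1 (p - 1) r1 -> is_poly1 (p - 1) r2 ->
    edge_int u v (fun t =>
      let sn := sigma_n s (onormal u v w) (seg u v t) in
      fst sn * r1 t + snd sn * r2 t) = 0.

Definition normal_free_on_edge (t : symfield) (u v w : pt) : Prop :=
  forall t0 : R, 0 <= t0 <= 1 -> sigma_n t (onormal u v w) (seg u v t0) = (0, 0).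

Definition in_Sigma0 (p : nat) (a b c : pt) (t : symfield) : Prop :=
  is_polySym p t /\ normal_free_on_edge t a b c /\
  normal_free_on_edge t b c a /\ normal_free_on_edge t c a b.

(* Main.v *)
Require Import Defs.
From Stdlib Require Import Reals Lra Lia.
From Coquelicot Require Import Coquelicot.
Open Scope R_scope.

Lemma sumlt_shift m f : sumlt (S m) f = f 0%nat + sumlt m (fun k => f (S k)).
Proof. induction m; simpl in *. lra. rewrite IHm. simpl. lra. Qed.

Lemma sumlt_plus m f g : sumlt m (fun k => f k + g k) = sumlt m f + sumlt m g.
Proof. induction m; simpl. lra. rewrite IHm. lra. Qed.

Lemma sumlt_scal m k f : sumlt m (fun i => k * f i) = k * sumlt m f.
Proof. induction m; simpl. lra. rewrite IHm. lra. Qed.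

Lemma sumlt_ext m f g : (forall k, (k < m)%nat -> f k = g k) -> sumlt m f = sumlt m g.
Proof. induction m; simpl; intros H. lra. rewrite IHm by (intros; apply H; lia). rewrite H by lia. lra. Qed.

Inductive Pd : nat -> (R -> R) -> Prop :=
| Pd_const n c : Pd n (fun _ => c)
| Pd_plus n f g : Pd n f -> Pd n g -> Pd n (fun t => f t + g t)
| Pd_X n f : Pd n f -> Pd (S n) (fun t => t * f t)
| Pd_weak n f : Pd n f -> Pd (S n) f
| Pd_ext n f g : Pd n f -> (forall t, f t = g t) -> Pd n g.

Lemma Pd_scal n f k : Pd n f -> Pd n (fun t => k * f t).
Proof.
  induction 1.
  - apply Pd_const.
  - apply Pd_ext with (fun t => k * f t + k * g t). apply Pd_plus; eauto. intros; simpl; ring.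
  - apply Pd_ext with (fun t => t * (k * f t)). apply Pd_X; eauto. intros; simpl; ring.
  - apply Pd_weak; auto.
  - apply Pd_ext with (fun t => k * f t). eauto. intros; simpl. rewrite H0. ring.
Qed.

Lemma Pd_le n m f : Pd n f -> (n <= m)%nat -> Pd m f.
Proof. intros H Hle. induction Hle; auto. apply Pd_weak; auto. Qed.

Lemma Pd_mul m n f0 h : Pd m f0 -> Pd n h -> Pd (m + n) (fun t => f0 t * h t).
Proof.
  intros Hf Hg. induction Hf.
  - apply Pd_le with n. now apply Pd_scal. lia.
  - apply Pd_ext with (fun t => f t * h t + g t * h t). apply Pd_plus; eauto. intros; simpl; ring.
  - apply Pd_ext with (fun t => t * (f t * h t)). apply Pd_X; eauto. intros; simpl; ring.
  - apply Pd_weak; auto.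
  - apply Pd_ext with (fun t => f t * h t). eauto. intros; simpl. match goal with E: forall t, _ = _ |- _ => rewrite E end. ring.
Qed.

Lemma Pd_pow f k : Pd 1 f -> Pd k (fun t => f t ^ k).
Proof.
  intros H. induction k.
  - simpl. apply Pd_const.
  - simpl. apply (Pd_mul 1 k); auto.
Qed.

Lemma Pd_sumlt n m (F : nat -> R -> R) :
  (forall k, (k < m)%nat -> Pd n (F k)) -> Pd n (fun t => sumlt m (fun k => F k t)).
Proof.
  induction m; intros H; simpl.
  - apply Pd_const.
  - apply Pd_plus. apply IHm; intros; apply H; lia. apply H; lia.
Qed.

Lemma Pd_is_poly1 n f : Pd n f -> is_poly1 (S n) f.
Proof.
  induction 1.
  - exists (fun k => match k with O => c | _ => 0 end). intros t.
    induction n; simpl in *. lra. rewrite <- IHn. lra.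
  - destruct IHPd1 as [c1 H1], IHPd2 as [c2 H2].
    exists (fun k => c1 k + c2 k). intros t. rewrite H1, H2, <- sumlt_plus.
    apply sumlt_ext. intros; ring.
  - destruct IHPd as [c Hc].
    exists (fun k => match k with O => 0 | S k' => c k' end). intros t.
    rewrite sumlt_shift, Hc, <- sumlt_scal. cbv beta iota. rewrite Rmult_0_l, Rplus_0_l.
    apply sumlt_ext; intros; simpl; ring.
  - destruct IHPd as [c Hc].
    exists (fun k => if Nat.leb k n then c k else 0). intros t.
    rewrite Hc. change (sumlt (S (S n)) ?F) with (sumlt (S n) F + F (S n)).
    cbv beta. replace (Nat.leb (S n) n) with false by (symmetry; apply Nat.leb_gt; lia). rewrite Rmult_0_l, Rplus_0_r.
    apply sumlt_ext; intros k Hk. rewrite (proj2 (Nat.leb_le k n)) by lia. auto.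
  - destruct IHPd as [c Hc]. exists c. intros t. rewrite <- H0. auto.
Qed.

Lemma Pd0_const f : Pd 0 f -> forall t u, f t = f u.
Proof.
  intros H t u. destruct (Pd_is_poly1 _ _ H) as [c Hc]. rewrite !Hc. simpl. ring.
Qed.

Lemma Pd_div n g : Pd n g -> forall a, exists h, Pd (pred n) h /\ forall t, g t - g a = (t - a) * h t.
Proof.
  induction 1; intros a.
  - exists (fun _ => 0). split. apply Pd_const. intros; ring.
  - destruct (IHPd1 a) as [h1 [P1 E1]], (IHPd2 a) as [h2 [P2 E2]].
    exists (fun t => h1 t + h2 t). split. now apply Pd_plus.
    intros t. specialize (E1 t). specialize (E2 t). nra.
  - destruct (IHPd a) as [h1 [P1 E1]].
    exists (fun t => f t + a * h1 t). split. simpl. apply Pd_plus. auto.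
    apply Pd_scal. apply Pd_le with (pred n); auto; lia.
    intros t. specialize (E1 t). nra.
  - destruct (IHPd a) as [h1 [P1 E1]]. exists h1. split; auto. simpl. apply Pd_le with (pred n); auto; lia.
  - destruct (IHPd a) as [h1 [P1 E1]]. exists h1. split; auto. intros t. rewrite <- !H0. auto.
Qed.

Lemma Pd_zero_interval n g lo hi : Pd n g -> lo < hi -> (forall t, lo < t < hi -> g t = 0) -> forall t, g t = 0.
Proof.
  revert g lo hi. induction n; intros g lo hi Hg Hlh Hz t.
  - rewrite (Pd0_const _ Hg t ((lo+hi)/2)). apply Hz; lra.
  - destruct (Pd_div _ _ Hg ((lo+hi)/2)) as [h [Ph Eh]]. simpl in Ph.
    assert (Hh : forall t, h t = 0).
    { apply (IHn h ((lo+hi)/2) hi Ph). lra. intros u Hu.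
      specialize (Eh u). rewrite !Hz in Eh by lra.
      rewrite Rminus_0_r in Eh. symmetry in Eh. apply Rmult_integral in Eh. destruct Eh; lra. }
    specialize (Eh t). rewrite Hh, (Hz ((lo+hi)/2)) in Eh by lra. lra.
Qed.

Lemma Pd_cont n f : Pd n f -> forall x, continuous f x.
Proof.
  induction 1; intros x.
  - apply continuous_const.
  - apply (continuous_plus f g); auto.
  - apply (continuous_mult (fun t => t) f). apply continuous_id. auto.
  - auto.
  - eapply continuous_ext; eauto.
Qed.

Lemma Pd_affine x0 dx : Pd 1 (fun t => x0 + t * dx).
Proof. apply Pd_plus. apply Pd_const. apply Pd_X. apply Pd_const. Qed.

Lemma poly2_line p f : is_poly2 p f -> forall x0 y0 dx dy,
  Pd p (fun t => f (x0 + t*dx) (y0 + t*dy)).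
Proof.
  intros [c Hc] x0 y0 dx dy. eapply Pd_ext; [| intros t; symmetry; apply Hc].
  apply Pd_sumlt. intros i Hi. apply Pd_sumlt. intros j Hj.
  apply Pd_le with (0 + i + j)%nat; [| lia].
  apply Pd_mul. apply Pd_mul. apply Pd_const.
  apply (Pd_pow (fun t => x0 + t*dx)), Pd_affine.
  apply (Pd_pow (fun t => y0 + t*dy)), Pd_affine.
Qed.

Lemma ball_R (x e y : R) : ball x e y -> Rabs (y - x) < e.
Proof. unfold ball; simpl. unfold AbsRing_ball, abs, minus, plus, opp; simpl. auto. Qed.

Lemma R_ball (x e y : R) : Rabs (y - x) < e -> ball x e y.
Proof. unfold ball; simpl. unfold AbsRing_ball, abs, minus, plus, opp; simpl. auto. Qed.

Lemma int_zero a b (f : R -> R) : a < b -> (forall x, a <= x <= b -> continuous f x) ->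
  (forall x, a <= x <= b -> 0 <= f x) -> RInt f a b = 0 -> forall x, a < x < b -> f x = 0.
Proof.
  intros Hab Hc Hp Hi x0 Hx0.
  destruct (Rle_lt_or_eq_dec 0 (f x0) (Hp x0 ltac:(lra))) as [Hpos|]; [|auto].
  exfalso.
  assert (He : 0 < f x0 / 2) by lra.
  pose proof (proj1 (filterlim_locally (F := locally x0) f (f x0)) (Hc x0 ltac:(lra)) (mkposreal _ He)) as [d Hd].
  simpl in Hd.
  set (e := Rmin (d/2) (Rmin (x0 - a) (b - x0))).
  assert (He0 : 0 < e).
  { unfold e. destruct d as [d dp]. simpl. repeat apply Rmin_glb_lt; lra. }
  assert (He1 : e <= d/2) by apply Rmin_l.
  assert (He2 : e <= x0 - a) by (eapply Rle_trans; [apply Rmin_r|apply Rmin_l]).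
  assert (He3 : e <= b - x0) by (eapply Rle_trans; [apply Rmin_r|apply Rmin_r]).
  assert (Hnear : forall y, x0 - e <= y <= x0 + e -> f x0 / 2 < f y).
  { intros y Hy. assert (Hb : ball x0 d y).
    { apply R_ball. destruct d as [d dp]; simpl in *. apply Rabs_def1; lra. }
    specialize (Hd y Hb). apply ball_R in Hd. apply Rabs_def2 in Hd. lra. }
  assert (Hex : forall u v, a <= u -> u <= v -> v <= b -> ex_RInt f u v).
  { intros u v H1 H2 H3. apply (ex_RInt_continuous (V := R_CompleteNormedModule)). intros z Hz.
    rewrite Rmin_left in Hz by lra. rewrite Rmax_right in Hz by lra. apply Hc; lra. }
  assert (E1 : RInt f a b = RInt f a (x0 - e) + (RInt f (x0 - e) (x0 + e) + RInt f (x0 + e) b)).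
  { rewrite <- (RInt_Chasles f a (x0 - e) b) by (apply Hex; lra).
    rewrite <- (RInt_Chasles f (x0 - e) (x0 + e) b) by (apply Hex; lra). reflexivity. }
  assert (I1 : 0 <= RInt f a (x0 - e)).
  { apply RInt_ge_0. lra. apply Hex; lra. intros; apply Hp; lra. }
  assert (I3 : 0 <= RInt f (x0 + e) b).
  { apply RInt_ge_0. lra. apply Hex; lra. intros; apply Hp; lra. }
  assert (I2 : 0 < RInt f (x0 - e) (x0 + e)).
  { apply RInt_gt_0. lra. intros y Hy. specialize (Hnear y ltac:(lra)). lra.
    intros; apply Hc; lra. }
  lra.
Qed.

Lemma factor01 n g : Pd n g -> g 0 = 0 -> g 1 = 0 ->
  exists q, Pd (pred (pred n)) q /\ forall t, g t = t*(t-1)*q t.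
Proof.
  intros Hg H0 H1.
  destruct (Pd_div _ _ Hg 0) as [h [Ph Eh]].
  assert (Hh1 : h 1 = 0). { specialize (Eh 1). rewrite H0, H1 in Eh. lra. }
  destruct (Pd_div _ _ Ph 1) as [q [Pq Eq]].
  exists q. split; auto. intros t. specialize (Eh t). specialize (Eq t).
  rewrite H0, Hh1 in *. nra.
Qed.

Lemma zero01_deg1 g : Pd 1 g -> g 0 = 0 -> g 1 = 0 -> forall t, g t = 0.
Proof.
  intros Hg H0 H1 t.
  destruct (Pd_div _ _ Hg 0) as [h [Ph Eh]]. simpl in Ph.
  assert (Hh1 : h 1 = 0). { specialize (Eh 1). rewrite H0, H1 in Eh. lra. }
  specialize (Eh t). rewrite (Pd0_const _ Ph t 1), Hh1, H0 in Eh. lra.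
Qed.

Lemma sigma_n_poly1 p s n u v : is_polySym p s ->
  Pd p (fun t => fst (sigma_n s n (seg u v t))).
Proof.
  intros [H1 [H2 H3]]. unfold sigma_n, seg; simpl.
  apply Pd_plus.
  - apply Pd_ext with (fun t => fst n * s11 s (fst u + t * (fst v - fst u)) (snd u + t * (snd v - snd u))).
    apply Pd_scal, poly2_line; auto. intros; ring.
  - apply Pd_ext with (fun t => snd n * s12 s (fst u + t * (fst v - fst u)) (snd u + t * (snd v - snd u))).
    apply Pd_scal, poly2_line; auto. intros; ring.
Qed.

Lemma sigma_n_poly2 p s n u v : is_polySym p s ->
  Pd p (fun t => snd (sigma_n s n (seg u v t))).
Proof.
  intros [H1 [H2 H3]]. unfold sigma_n, seg; simpl.
  apply Pd_plus.
  - apply Pd_ext with (fun t => fst n * s12 s (fst u + t * (fst v - fst u)) (snd u + t * (snd v - snd u))).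
    apply Pd_scal, poly2_line; auto. intros; ring.
  - apply Pd_ext with (fun t => snd n * s22 s (fst u + t * (fst v - fst u)) (snd u + t * (snd v - snd u))).
    apply Pd_scal, poly2_line; auto. intros; ring.
Qed.

Lemma seg0 u v : seg u v 0 = (fst u, snd u).
Proof. unfold seg. f_equal; ring. Qed.
Lemma seg1 u v : seg u v 1 = (fst v, snd v).
Proof. unfold seg. f_equal; ring. Qed.

Lemma sigma_n_vertex s n x : vertex_dof0 s x -> sigma_n s n (fst x, snd x) = (0, 0).
Proof. intros [H1 [H2 H3]]. unfold sigma_n; simpl. rewrite H1, H2, H3. f_equal; ring. Qed.

Lemma edge_ok p s u v w : (1 <= p)%nat -> is_polySym p s -> dist2 u v <> 0 ->
  vertex_dof0 s u -> vertex_dof0 s v -> edge_dof0 p s u v w -> normal_free_on_edge s u v w.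
Proof.
  intros Hp Hs Hd Vu Vv He.
  pose proof (sigma_n_poly1 p s (onormal u v w) u v Hs) as P1.
  pose proof (sigma_n_poly2 p s (onormal u v w) u v Hs) as P2.
  pose proof (sigma_n_vertex s (onormal u v w) u Vu) as Z0.
  pose proof (sigma_n_vertex s (onormal u v w) v Vv) as Z1.
  rewrite <- (seg0 u v) in Z0. rewrite <- (seg1 u v) in Z1.
  intros t0 Ht0.
  destruct (Nat.eq_dec p 1) as [E|E].
  - subst p. apply injective_projections.
    + rewrite (zero01_deg1 _ P1); [reflexivity| rewrite Z0 | rewrite Z1]; reflexivity.
    + rewrite (zero01_deg1 _ P2); [reflexivity| rewrite Z0 | rewrite Z1]; reflexivity.
  - destruct (factor01 _ _ P1) as [q1 [Q1 E1]]; [rewrite Z0; reflexivity | rewrite Z1; reflexivity |].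
    destruct (factor01 _ _ P2) as [q2 [Q2 E2]]; [rewrite Z0; reflexivity | rewrite Z1; reflexivity |].
    assert (Hpp : S (pred (pred p)) = (p - 1)%nat) by lia.
    assert (R1 : is_poly1 (p - 1) (fun t => -1 * q1 t)).
    { rewrite <- Hpp. apply Pd_is_poly1. apply Pd_scal. auto. }
    assert (R2 : is_poly1 (p - 1) (fun t => -1 * q2 t)).
    { rewrite <- Hpp. apply Pd_is_poly1. apply Pd_scal. auto. }
    specialize (He _ _ R1 R2). unfold edge_int in He.
    apply Rmult_integral in He. destruct He as [He|He]; [contradiction|].
    set (G := fun t => t * (1 - t) * (q1 t * q1 t + q2 t * q2 t)).
    assert (HG : RInt G 0 1 = 0).
    { etransitivity; [|exact He]. apply RInt_ext. intros x _. cbv zeta. rewrite E1, E2. unfold G. change (x * (1 - x) * (q1 x * q1 x + q2 x * q2 x) = x * (x - 1) * q1 x * (-1 * q1 x) + x * (x - 1) * q2 x * (-1 * q2 x)). ring. }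
    assert (PG : Pd (1 + 1 + (pred (pred p) + pred (pred p))) G).
    { apply Pd_mul. apply Pd_mul.
      apply Pd_ext with (fun t => t * 1). apply Pd_X, Pd_const. intros; ring.
      apply Pd_ext with (fun t => 1 + t * (-1)). apply Pd_affine. intros; ring.
      apply Pd_plus; apply Pd_mul; auto. }
    assert (Hz : forall t, 0 < t < 1 -> G t = 0).
    { apply int_zero; [lra | intros; eapply Pd_cont; eauto | | auto].
      intros x Hx. unfold G. assert (0 <= x * (1 - x)) by nra. 
      assert (0 <= q1 x * q1 x + q2 x * q2 x) by nra. nra. }
    destruct (Rle_lt_or_eq_dec 0 t0 (proj1 Ht0)) as [Ha|Ha]; [|subst t0; rewrite Z0; reflexivity].
    destruct (Rle_lt_or_eq_dec t0 1 (proj2 Ht0)) as [Hb|Hb]; [|subst t0; rewrite Z1; reflexivity].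
    specialize (Hz t0 ltac:(lra)). unfold G in Hz.
    assert (Hq : q1 t0 * q1 t0 + q2 t0 * q2 t0 = 0).
    { assert (0 < t0 * (1 - t0)) by nra.
      apply Rmult_integral in Hz. destruct Hz; [lra|auto]. }
    assert (q1 t0 = 0) by nra. assert (q2 t0 = 0) by nra.
    apply injective_projections.
    + rewrite E1. simpl. rewrite H. ring.
    + rewrite E2. simpl. rewrite H0. ring.
Qed.

Inductive Pd2 : (R -> R -> R) -> Prop :=
| Q_const c : Pd2 (fun _ _ => c)
| Q_plus f g : Pd2 f -> Pd2 g -> Pd2 (fun s t => f s t + g s t)
| Q_S f : Pd2 f -> Pd2 (fun s t => s * f s t)
| Q_T f : Pd2 f -> Pd2 (fun s t => t * f s t)
| Q_ext f g : Pd2 f -> (forall s t, f s t = g s t) -> Pd2 g.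

Lemma Q_scal f k : Pd2 f -> Pd2 (fun s t => k * f s t).
Proof.
  induction 1.
  - apply Q_const.
  - apply Q_ext with (fun s t => k * f s t + k * g s t). apply Q_plus; auto. intros; ring.
  - apply Q_ext with (fun s t => s * (k * f s t)). apply Q_S; auto. intros; ring.
  - apply Q_ext with (fun s t => t * (k * f s t)). apply Q_T; auto. intros; ring.
  - apply Q_ext with (fun s t => k * f s t). auto. intros. rewrite H0. ring.
Qed.

Lemma Q_mul f0 h : Pd2 f0 -> Pd2 h -> Pd2 (fun s t => f0 s t * h s t).
Proof.
  intros Hf Hh. induction Hf.
  - apply Q_scal; auto.
  - apply Q_ext with (fun s t => f s t * h s t + g s t * h s t). apply Q_plus; auto. intros; ring.
  - apply Q_ext with (fun s t => s * (f s t * h s t)). apply Q_S; auto. intros; ring.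
  - apply Q_ext with (fun s t => t * (f s t * h s t)). apply Q_T; auto. intros; ring.
  - apply Q_ext with (fun s t => f s t * h s t). auto. intros. rewrite H. ring.
Qed.

Lemma Q_pow f k : Pd2 f -> Pd2 (fun s t => f s t ^ k).
Proof. intros H. induction k; simpl. apply Q_const. apply Q_mul; auto. Qed.

Lemma Q_sumlt m (F : nat -> R -> R -> R) :
  (forall k, (k < m)%nat -> Pd2 (F k)) -> Pd2 (fun s t => sumlt m (fun k => F k s t)).
Proof.
  induction m; intros H; simpl. apply Q_const.
  apply Q_plus. apply IHm; intros; apply H; lia. apply H; lia.
Qed.

Lemma Q_affine x0 d1 d2 : Pd2 (fun s t => x0 + s * d1 + t * d2).
Proof. apply Q_plus. apply Q_plus. apply Q_const. apply Q_S, Q_const. apply Q_T, Q_const. Qed.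

Lemma poly2_Q p f x0 y0 d1 d2 e1 e2 : is_poly2 p f ->
  Pd2 (fun s t => f (x0 + s*d1 + t*d2) (y0 + s*e1 + t*e2)).
Proof.
  intros [c Hc]. eapply Q_ext; [| intros s t; symmetry; apply Hc].
  apply Q_sumlt. intros i Hi. apply Q_sumlt. intros j Hj.
  apply Q_mul. apply Q_mul. apply Q_const.
  apply (Q_pow (fun s t => x0 + s*d1 + t*d2)), Q_affine.
  apply (Q_pow (fun s t => y0 + s*e1 + t*e2)), Q_affine.
Qed.

Lemma Q_cont_t f : Pd2 f -> forall s t, continuous (f s) t.
Proof.
  induction 1; intros s t.
  - apply continuous_const.
  - apply (continuous_plus (f s) (g s)); auto.
  - apply (continuous_mult (fun _ => s) (f s)). apply continuous_const. auto.
  - apply (continuous_mult (fun t => t) (f s)). apply continuous_id. auto.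
  - eapply continuous_ext; eauto.
Qed.

Lemma Pd_id : Pd 1 (fun t => t).
Proof. apply Pd_ext with (fun t => t * 1). apply Pd_X, Pd_const. intros; ring. Qed.

Lemma Q_ex f k s a b : Pd2 f -> ex_RInt (fun t => t^k * f s t) a b.
Proof.
  intros H. apply (ex_RInt_continuous (V := R_CompleteNormedModule)). intros z _.
  apply (continuous_mult (fun t => t^k) (f s)).
  apply (Pd_cont k). apply (Pd_pow (fun t => t)), Pd_id. apply Q_cont_t; auto.
Qed.

Lemma RInt_pow_c k c x : RInt (fun t => t^k * c) 0 x = c * x^(S k) / INR (S k).
Proof.
  assert (HN : INR (S k) <> 0) by (apply not_0_INR; lia).
  assert (H := is_RInt_derive (fun t => c * t^(S k) / INR (S k)) (fun t => t^k * c) 0 x).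
  assert (D : forall y, Rmin 0 x <= y <= Rmax 0 x -> is_derive (fun t : R => c * t ^ S k / INR (S k)) y ((fun t : R => t ^ k * c) y)).
  { intros y _. auto_derive. auto. change (match k with 0%nat => 1 | S _ => INR k + 1 end) with (INR (S k)). field. auto. }
  assert (C : forall y, Rmin 0 x <= y <= Rmax 0 x -> continuous (fun t : R => t ^ k * c) y).
  { intros y _. apply (continuous_mult (fun t => t^k) (fun _ => c)).
    apply (Pd_cont k). apply (Pd_pow (fun t => t)), Pd_id. apply continuous_const. }
  rewrite (is_RInt_unique _ _ _ _ (H D C)).
  change (c * x ^ S k / INR (S k) + - (c * 0 ^ S k / INR (S k)) = c * x ^ S k / INR (S k)). rewrite (pow_i (S k)) by lia. field. auto.
Qed.
Lemma RInt_ext_R (f g : R -> R) a b : (forall x, f x = g x) -> RInt f a b = RInt g a b.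
Proof. intros H. apply RInt_ext. intros; apply H. Qed.

Lemma RInt_plus_R (f g : R -> R) a b : ex_RInt f a b -> ex_RInt g a b ->
  RInt (fun x => f x + g x) a b = RInt f a b + RInt g a b.
Proof. intros. exact (RInt_plus (V := R_CompleteNormedModule) f g a b H H0). Qed.

Lemma RInt_scal_R (f : R -> R) a b l : ex_RInt f a b ->
  RInt (fun x => l * f x) a b = l * RInt f a b.
Proof. intros. exact (RInt_scal (V := R_CompleteNormedModule) f a b l H). Qed.

Lemma Q_int_cont f : Pd2 f -> forall k s0,
  continuous (fun s => RInt (fun t => t^k * f s t) 0 (1 - s)) s0.
Proof.
  induction 1; intros k s0.
  - eapply continuous_ext. intros s. symmetry. apply RInt_pow_c.
    apply (Pd_cont (S k)).
    apply Pd_ext with (fun s => c / INR (S k) * (1 + s * (-1)) ^ (S k)).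
    apply Pd_scal. apply (Pd_pow (fun s => 1 + s * (-1))), Pd_affine.
    intros s. replace (1 + s * -1) with (1 - s) by ring. field. apply not_0_INR; lia.
  - apply continuous_ext with (fun s => RInt (fun t => t ^ k * f s t) 0 (1 - s) + RInt (fun t => t ^ k * g s t) 0 (1 - s)).
    + intros s. rewrite <- RInt_plus_R by (apply Q_ex; auto).
      apply RInt_ext_R. intros; ring.
    + apply (continuous_plus (fun s => RInt (fun t => t ^ k * f s t) 0 (1 - s))
                           (fun s => RInt (fun t => t ^ k * g s t) 0 (1 - s))); auto.
  - apply continuous_ext with (fun s => s * RInt (fun t => t ^ k * f s t) 0 (1 - s)).
    + intros s. rewrite <- RInt_scal_R by (apply Q_ex; auto).
      apply RInt_ext_R. intros; ring.
    + apply (continuous_mult (fun s => s) (fun s => RInt (fun t => t ^ k * f s t) 0 (1 - s))).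
      apply continuous_id. auto.
  - apply continuous_ext with (fun s => RInt (fun t => t ^ (S k) * f s t) 0 (1 - s)).
    + intros s. apply RInt_ext_R. intros; simpl; ring.
    + auto.
  - apply continuous_ext with (fun s => RInt (fun t => t ^ k * f s t) 0 (1 - s)).
    + intros s. apply RInt_ext_R. intros. rewrite H0. reflexivity.
    + auto.
Qed.

Lemma dist2_neq u v : fst u <> fst v \/ snd u <> snd v -> dist2 u v <> 0.
Proof.
  intros H E. unfold dist2 in E.
  apply sqrt_eq_0 in E.
  - simpl in E. pose proof (Rle_0_sqr (fst v - fst u)). pose proof (Rle_0_sqr (snd v - snd u)). unfold Rsqr in *.
    assert (E1 : (fst v - fst u) * (fst v - fst u) = 0) by lra.
    assert (E2 : (snd v - snd u) * (snd v - snd u) = 0) by lra.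
    apply Rmult_integral in E1. apply Rmult_integral in E2.
    destruct H as [H|H]; apply H; destruct E1, E2; lra.
  - pose proof (pow2_ge_0 (fst v - fst u)). pose proof (pow2_ge_0 (snd v - snd u)). lra.
Qed.

Lemma vanish_all p f (a b c : pt) : det2 a b c <> 0 -> is_poly2 p f ->
  (forall s t, 0 < s < 1 -> 0 < t < 1 - s ->
     f (fst a + s * (fst b - fst a) + t * (fst c - fst a))
       (snd a + s * (snd b - snd a) + t * (snd c - snd a)) = 0) ->
  forall x y, f x y = 0.
Proof.
  intros Hd Hf Hz.
  assert (S1 : forall s, 0 < s < 1 -> forall t,
     f (fst a + s * (fst b - fst a) + t * (fst c - fst a))
       (snd a + s * (snd b - snd a) + t * (snd c - snd a)) = 0).
  { intros s Hs. apply (Pd_zero_interval p (fun t => f (fst a + s * (fst b - fst a) + t * (fst c - fst a))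
       (snd a + s * (snd b - snd a) + t * (snd c - snd a))) 0 (1 - s)).
    - eapply Pd_ext. apply (poly2_line p f Hf (fst a + s * (fst b - fst a)) (snd a + s * (snd b - snd a)) (fst c - fst a) (snd c - snd a)).
      intros t. reflexivity.
    - lra.
    - intros t Ht. apply Hz; lra. }
  assert (S2 : forall t s,
     f (fst a + s * (fst b - fst a) + t * (fst c - fst a))
       (snd a + s * (snd b - snd a) + t * (snd c - snd a)) = 0).
  { intros t. apply (Pd_zero_interval p (fun s => f (fst a + s * (fst b - fst a) + t * (fst c - fst a))
       (snd a + s * (snd b - snd a) + t * (snd c - snd a))) 0 1).
    - eapply Pd_ext. apply (poly2_line p f Hf (fst a + t * (fst c - fst a)) (snd a + t * (snd c - snd a)) (fst b - fst a) (snd b - snd a)).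
      intros s. cbv beta. f_equal; ring.
    - lra.
    - intros s Hs. apply S1; auto. }
  intros x y.
  unfold det2 in Hd.
  specialize (S2 (((fst b - fst a) * (y - snd a) - (snd b - snd a) * (x - fst a)) / det2 a b c)
                 (((x - fst a) * (snd c - snd a) - (y - snd a) * (fst c - fst a)) / det2 a b c)).
  unfold det2 in S2.
  replace (fst a + (((x - fst a) * (snd c - snd a) - (y - snd a) * (fst c - fst a)) / ((fst b - fst a) * (snd c - snd a) - (snd b - snd a) * (fst c - fst a))) * (fst b - fst a) + (((fst b - fst a) * (y - snd a) - (snd b - snd a) * (x - fst a)) / ((fst b - fst a) * (snd c - snd a) - (snd b - snd a) * (fst c - fst a))) * (fst c - fst a)) with x in S2 by (field; auto).
  replace (snd a + (((x - fst a) * (snd c - snd a) - (y - snd a) * (fst c - fst a)) / ((fst b - fst a) * (snd c - snd a) - (snd b - snd a) * (fst c - fst a))) * (snd b - snd a) + (((fst b - fst a) * (y - snd a) - (snd b - snd a) * (x - fst a)) / ((fst b - fst a) * (snd c - snd a) - (snd b - snd a) * (fst c - fst a))) * (snd c - snd a)) with y in S2 by (field; auto).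
  exact S2.
Qed.

Theorem lemma3p2 (a b c : pt) (p : nat) (s : symfield) :
  det2 a b c <> 0 ->
  (1 <= p)%nat ->
  is_polySym p s ->
  vertex_dof0 s a -> vertex_dof0 s b -> vertex_dof0 s c ->
  edge_dof0 p s a b c -> edge_dof0 p s b c a -> edge_dof0 p s c a b ->
  (forall t : symfield, in_Sigma0 p a b c t -> tri_int a b c (ddot s t) = 0) ->
  forall x y : R, s11 s x y = 0 /\ s12 s x y = 0 /\ s22 s x y = 0.
Proof.
  intros Hd Hp Hs Va Vb Vc Ea Eb Ec Hint.
  assert (Dab : dist2 a b <> 0).
  { apply dist2_neq. destruct (Req_dec (fst a) (fst b)); [right|left; auto].
    intros E. apply Hd. unfold det2. rewrite H, E. ring. }
  assert (Dbc : dist2 b c <> 0).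
  { apply dist2_neq. destruct (Req_dec (fst b) (fst c)); [right|left; auto].
    intros E. apply Hd. unfold det2. rewrite H, E. ring. }
  assert (Dca : dist2 c a <> 0).
  { apply dist2_neq. destruct (Req_dec (fst c) (fst a)); [right|left; auto].
    intros E. apply Hd. unfold det2. rewrite H, E. ring. }
  pose proof (edge_ok p s a b c Hp Hs Dab Va Vb Ea) as N1.
  pose proof (edge_ok p s b c a Hp Hs Dbc Vb Vc Eb) as N2.
  pose proof (edge_ok p s c a b Hp Hs Dca Vc Va Ec) as N3.
  specialize (Hint s (conj Hs (conj N1 (conj N2 N3)))).
  unfold tri_int in Hint. apply Rmult_integral in Hint.
  destruct Hint as [Hint|Hint]; [apply Rabs_no_R0 in Hd; contradiction|].
  set (X := fun u v => fst a + u * (fst b - fst a) + v * (fst c - fst a)) in *.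
  set (Y := fun u v => snd a + u * (snd b - snd a) + v * (snd c - snd a)) in *.
  set (F := fun u v => ddot s s (X u v) (Y u v)).
  destruct Hs as [H11 [H12 H22]].
  assert (PF : Pd2 F).
  { unfold F, ddot, X, Y. apply Q_plus. apply Q_plus.
    apply Q_mul; apply (poly2_Q p); auto.
    apply Q_scal. apply Q_mul; apply (poly2_Q p); auto.
    apply Q_mul; apply (poly2_Q p); auto. }
  assert (FP : forall u v, 0 <= F u v).
  { intros u v. unfold F, ddot. nra. }
  assert (HI : RInt (fun u => RInt (fun v => F u v) 0 (1 - u)) 0 1 = 0).
  { exact Hint. }
  assert (Iz : forall u, 0 < u < 1 -> RInt (fun v => F u v) 0 (1 - u) = 0).
  { apply int_zero; [lra | | | exact HI].
    - intros u _. apply continuous_ext with (fun u => RInt (fun v => v ^ 0 * F u v) 0 (1 - u)).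
      intros w. apply RInt_ext_R. intros; simpl; ring.
      apply Q_int_cont; auto.
    - intros u Hu. apply RInt_ge_0. lra.
      apply (ex_RInt_continuous (V := R_CompleteNormedModule)). intros; apply Q_cont_t; auto.
      intros; auto. }
  assert (Fz : forall u v, 0 < u < 1 -> 0 < v < 1 - u -> F u v = 0).
  { intros u v Hu Hv. apply (int_zero 0 (1 - u) (F u)); auto. lra.
    intros; apply Q_cont_t; auto. }
  assert (Z : forall u v, 0 < u < 1 -> 0 < v < 1 - u ->
     s11 s (X u v) (Y u v) = 0 /\ s12 s (X u v) (Y u v) = 0 /\ s22 s (X u v) (Y u v) = 0).
  { intros u v Hu Hv. specialize (Fz u v Hu Hv). unfold F, ddot in Fz.
    split; [|split]; nra. }
  intros x y. split; [|split].
  - apply (vanish_all p _ a b c Hd H11). intros u v Hu Hv. apply (Z u v Hu Hv).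
  - apply (vanish_all p _ a b c Hd H12). intros u v Hu Hv. apply (Z u v Hu Hv).
  - apply (vanish_all p _ a b c Hd H22). intros u v Hu Hv. apply (Z u v Hu Hv).
Qed.
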